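(* Let $W$ be a discrete memoryless channel with input alphabet $\mathbb{F}_q$ and let $m\ge1$. Then $C_{KV}(W^{\otimes m})=C_{KV}(W)^m$. In particular, if $C_{KV}(W)=1-\epsilon$ then $C_{KV}(W^{\otimes m})\ge1-m\epsilon$.
   Context: For memoryless channels $W$ (input $\mathcal{X}$, output $\mathcal{Y}$) and $W'$ (input $\mathcal{X}'$, output $\mathcal{Y}'$), the tensor product $W\otimes W'$ has input $\mathcal{X}\times\mathcal{X}'$, output $\mathcal{Y}\times\mathcal{Y}'$ and transition probabilities $(W\otimes W')(y,y'|x,x')=W(y|x)W'(y'|x')$; $W^{\otimes m}=W\otimes\cdots\otimes W$ ($m$ factors), with input alphabet $\mathbb{F}_q^m$ (identified with $\mathbb{F}_{q^m}$). For a channel with finite input alphabet $A$ and input uniformly distributed on $A$, the APP vector of output $y$ is $\pi_y=(\mathrm{prob}(\text{input}=a|y))_{a\in A}$ and the Koetter–Vardy capacity is $C_{KV}=\mathbb{E}(\sum_a\pi_y(a)^2)$, the expectation being over the channel output. *)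

(* Defs.v *)
From HB Require Import structures.
From mathcomp Require Import all_boot all_order all_algebra.
Set Implicit Arguments. Unset Strict Implicit. Unset Printing Implicit Defensive.
Import Order.TTheory GRing.Theory Num.Theory.
Local Open Scope ring_scope.

(* A discrete memoryless channel with finite input alphabet A and finite
   output alphabet Y: W a y = W(y|a). *)
Definition is_channel (R : realFieldType) (A Y : finType) (W : A -> Y -> R) : Prop :=
  (forall a y, 0 <= W a y) /\ (forall a, \sum_(y : Y) W a y = 1).

Definition out_prob (R : realFieldType) (A Y : finType) (W : A -> Y -> R) (y : Y) : R :=
  (#|A|%:R)^-1 * \sum_(a : A) W a y.

(* APP vector: prob(input = a | y) = (W(y|a)/|A|) / P(y) = W(y|a) / sum_x W(y|x).
   (For P(y) = 0 this is 0 by MathComp's x/0 = 0 convention; such y carry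
   weight 0 in the expectation.) *)
Definition app (R : realFieldType) (A Y : finType) (W : A -> Y -> R) (y : Y) (a : A) : R :=
  W a y / \sum_(x : A) W x y.

Definition C_KV (R : realFieldType) (A Y : finType) (W : A -> Y -> R) : R :=
  \sum_(y : Y) out_prob W y * \sum_(a : A) app W y a ^+ 2.

Definition tensor_pow (R : realFieldType) (A Y : finType) (m : nat) (W : A -> Y -> R)
  : {ffun 'I_m -> A} -> {ffun 'I_m -> Y} -> R :=
  fun x y => \prod_(i < m) W (x i) (y i).
Arguments tensor_pow {R A Y} m W _ _.

(* Main.v *)
Require Import Defs.
From HB Require Import structures.
From mathcomp Require Import all_boot all_order all_algebra.
From mathcomp Require Import ring lra.
Import Order.TTheory GRing.Theory Num.Theory.
Local Open Scope ring_scope.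

Lemma CKV_alt (R : realFieldType) (A Y : finType) (W : A -> Y -> R) :
  C_KV W = (#|A|%:R)^-1 *
    \sum_(y : Y) ((\sum_(a : A) W a y ^+ 2) / \sum_(a : A) W a y).
Proof.
rewrite /C_KV /out_prob mulr_sumr; apply: eq_bigr => y _.
rewrite -mulrA; congr (_ * _).
rewrite /app /=.
set S := \sum_(x : A) W x y.
rewrite (eq_bigr (fun a => W a y ^+ 2 * (S^-1) ^+ 2)); last first.
  by move=> a _; rewrite exprMn.
rewrite -mulr_suml.
have [->|S0] := eqVneq S 0; first by rewrite !mul0r invr0 mulr0.
by rewrite expr2; field.
Qed.

Lemma sum_prod (R : realFieldType) (A : finType) (m : nat) (f : A -> R) :
  \sum_(x : {ffun 'I_m -> A}) \prod_(i < m) f (x i) = (\sum_a f a) ^+ m.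
Proof.
rewrite -(@bigA_distr_bigA _ _ _ _ _ _ _ (fun (i : 'I_m) a => f a)).
by rewrite prodr_const card_ord.
Qed.

Lemma tensor_eq (R : realFieldType) (F Y : finType) (W : F -> Y -> R) (m : nat) :
  C_KV (tensor_pow m W) = C_KV W ^+ m.
Proof.
rewrite !CKV_alt card_ffun card_ord natrX exprMn exprVn.
congr (_ * _).
rewrite -(@sum_prod _ _ m (fun y => (\sum_(a : F) W a y ^+ 2) / \sum_(a : F) W a y)).
apply: eq_bigr => y _.
rewrite /tensor_pow.
rewrite (eq_bigr (fun x : {ffun 'I_m -> F} => \prod_(i < m) (W (x i) (y i)) ^+ 2)); last first.
  by move=> x _; rewrite prodrXl.
rewrite -(@bigA_distr_bigA _ _ _ _ _ _ _ (fun (i : 'I_m) a => W a (y i) ^+ 2)).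
rewrite -(@bigA_distr_bigA _ _ _ _ _ _ _ (fun (i : 'I_m) a => W a (y i))).
by rewrite big_split /= prodfV.
Qed.

Lemma CKV_ge0 (R : realFieldType) (A Y : finType) (W : A -> Y -> R) :
  is_channel W -> 0 <= C_KV W.
Proof.
move=> [W0 _]; rewrite CKV_alt; apply: mulr_ge0; first by rewrite invr_ge0.
apply: sumr_ge0 => y _; apply: divr_ge0; apply: sumr_ge0 => a _ //.
exact: sqr_ge0.
Qed.

Lemma bern (R : realFieldType) (e : R) (n : nat) :
  e <= 1 -> 1 - n%:R * e <= (1 - e) ^+ n.
Proof.
move=> he; elim: n => [|n IH]; first by rewrite mul0r subr0 expr0.
rewrite exprSr -natr1.
have h0 : 0 <= 1 - e by lra.
have := ler_wpM2r h0 IH.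
have : 0 <= n%:R * e * e.
  case: (leP 0 e) => he0; first by rewrite mulr_ge0 // mulr_ge0.
  rewrite -mulrA mulr_ge0 // mulr_le0 //; exact: ltW.
move=> h1 h2; apply: le_trans h2; nra.
Qed.

Theorem proposition5 (R : realFieldType) (F : finFieldType) (Y : finType)
  (W : F -> Y -> R) (m : nat) :
  is_channel W -> (1 <= m)%N ->
  C_KV (tensor_pow m W) = C_KV W ^+ m /\
  (forall eps : R, C_KV W = 1 - eps -> 1 - m%:R * eps <= C_KV (tensor_pow m W)).
Proof.
move=> hW _; split; first exact: tensor_eq.
move=> eps he; rewrite tensor_eq he; apply: bern.
have := @CKV_ge0 _ _ _ W hW; rewrite he; lra.
Qed.
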